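(* Let $\mathfrak g\xrightarrow{\mu}\mathfrak h$ be a crossed module of Lie algebras with action $\mathcal L$, let $\phi:W\to V$ be linear and $(\rho_0^1,\rho_0^0,\rho_1)$ a 2-representation on $\phi$. Then $$\bar\rho:\mathfrak g\oplus_{\mathcal L}\mathfrak h\to\mathfrak{gl}(W\oplus V),\qquad (x,y)\mapsto\begin{pmatrix}\rho_0^1(y+\mu(x)) & \rho_1(x)\\ 0 & \rho_0^0(y)\end{pmatrix}$$ (acting on column vectors $(w,v)$) is a Lie algebra representation.
   Context: A crossed module of Lie algebras consists of Lie algebras $\mathfrak g,\mathfrak h$, a Lie algebra homomorphism $\mu:\mathfrak g\to\mathfrak h$ and a Lie algebra homomorphism $\mathcal L:\mathfrak h\to\mathrm{Der}(\mathfrak g)$ with $\mu(\mathcal L_yx)=[y,\mu(x)]$ and $\mathcal L_{\mu(x_0)}x_1=[x_0,x_1]$. $\mathfrak g\oplus_{\mathcal L}\mathfrak h$ is $\mathfrak g\oplus\mathfrak h$ with bracket $[(x_0,y_0),(x_1,y_1)]=([x_0,x_1]+\mathcal L_{y_0}x_1-\mathcal L_{y_1}x_0,[y_0,y_1])$. A 2-representation on $\phi:W\to V$: linear maps $\rho_0^1:\mathfrak h\to\mathfrak{gl}(W)$, $\rho_0^0:\mathfrak h\to\mathfrak{gl}(V)$, $\rho_1:\mathfrak g\to\mathrm{Hom}(V,W)$ with $\rho_0^1,\rho_0^0$ Lie algebra representations, $\phi\rho_0^1(y)=\rho_0^0(y)\phi$, $\rho_1([x_0,x_1])=\rho_1(x_0)\phi\rho_1(x_1)-\rho_1(x_1)\phi\rho_1(x_0)$,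 $\rho_0^0(\mu(x))=\phi\rho_1(x)$, $\rho_0^1(\mu(x))=\rho_1(x)\phi$, $\rho_1(\mathcal L_yx)=\rho_0^1(y)\rho_1(x)-\rho_1(x)\rho_0^0(y)$. *)

(* Defs.v *)
From HB Require Import structures.
From mathcomp Require Import all_boot all_algebra.
Set Implicit Arguments. Unset Strict Implicit. Unset Printing Implicit Defensive.
Import GRing.Theory.
Local Open Scope ring_scope.

Definition is_lin (K : fieldType) (A B : lmodType K) (f : A -> B) : Prop :=
  forall (a : K) (u v : A), f (a *: u + v) = a *: f u + f v.

Definition is_lie (K : fieldType) (A : lmodType K) (br : A -> A -> A) : Prop :=
  [/\ forall x, is_lin (br x),
      forall y, is_lin (fun x => br x y),
      forall x, br x x = 0 &
      forall x y z, br x (br y z) + br y (br z x) + br z (br x y) = 0].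

Definition is_lie_hom (K : fieldType) (A B : lmodType K)
  (brA : A -> A -> A) (brB : B -> B -> B) (f : A -> B) : Prop :=
  is_lin f /\ forall x y, f (brA x y) = brB (f x) (f y).

Definition is_rep (K : fieldType) (A M : lmodType K)
  (br : A -> A -> A) (rho : A -> M -> M) : Prop :=
  [/\ forall x, is_lin (rho x),
      forall (a : K) x y m, rho (a *: x + y) m = a *: rho x m + rho y m &
      forall x y m, rho (br x y) m = rho x (rho y m) - rho y (rho x m)].

Definition crossed_module (K : fieldType) (g h : lmodType K)
  (bg : g -> g -> g) (bh : h -> h -> h) (mu : g -> h) (L : h -> g -> g) : Prop :=
  is_lie bg /\ is_lie bh /\ is_lie_hom bg bh mu /\
      [/\ forall y, is_lin (L y),
          forall (a : K) y0 y1 x, L (a *: y0 + y1) x = a *: L y0 x + L y1 x,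
          forall y x0 x1, L y (bg x0 x1) = bg (L y x0) x1 + bg x0 (L y x1) &
          forall y0 y1 x, L (bh y0 y1) x = L y0 (L y1 x) - L y1 (L y0 x)] /\
      (forall y x, mu (L y x) = bh y (mu x)) /\
      (forall x0 x1, L (mu x0) x1 = bg x0 x1).

Definition two_rep (K : fieldType) (g h W V : lmodType K)
  (bg : g -> g -> g) (bh : h -> h -> h) (mu : g -> h) (L : h -> g -> g)
  (phi : W -> V) (rho01 : h -> W -> W) (rho00 : h -> V -> V)
  (rho1 : g -> V -> W) : Prop :=
  is_rep bh rho01 /\ is_rep bh rho00 /\
      (forall x, is_lin (rho1 x)) /\
      (forall (a : K) x0 x1 v, rho1 (a *: x0 + x1) v = a *: rho1 x0 v + rho1 x1 v) /\
      (forall y w, phi (rho01 y w) = rho00 y (phi w)) /\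
      (forall x0 x1 v, rho1 (bg x0 x1) v =
                      rho1 x0 (phi (rho1 x1 v)) - rho1 x1 (phi (rho1 x0 v))) /\
      (forall x v, rho00 (mu x) v = phi (rho1 x v)) /\
      (forall x w, rho01 (mu x) w = rho1 x (phi w)) /\
      (forall y x v, rho1 (L y x) v = rho01 y (rho1 x v) - rho1 x (rho00 y v)).

Definition semidirect_bracket (K : fieldType) (g h : lmodType K)
  (bg : g -> g -> g) (bh : h -> h -> h) (L : h -> g -> g)
  (p q : g * h) : g * h :=
  (bg p.1 q.1 + L p.2 q.1 - L q.2 p.1, bh p.2 q.2).

(* rho_bar (x,y) acting on the column vector (w,v):
   [ rho01 (y + mu x)   rho1 x    ] [w]
   [ 0                  rho00 y   ] [v] *)
Definition rho_bar (K : fieldType) (g h W V : lmodType K)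
  (mu : g -> h) (rho01 : h -> W -> W) (rho00 : h -> V -> V)
  (rho1 : g -> V -> W) (p : g * h) (m : W * V) : W * V :=
  (rho01 (p.2 + mu p.1) m.1 + rho1 p.1 m.2, rho00 p.2 m.2).

(* Main.v *)
Require Import Defs.
From mathcomp Require Import all_boot all_algebra.
Set Implicit Arguments. Unset Strict Implicit. Unset Printing Implicit Defensive.
Import GRing.Theory.
Local Open Scope ring_scope.

Section L.
Variables (K : fieldType) (A B : lmodType K) (f : A -> B) (H : is_lin f).
Lemma linD u v : f (u+v) = f u + f v.
Proof. by have := H 1 u v; rewrite !scale1r. Qed.
Lemma lin0 : f 0 = 0.
Proof. by have := linD 0 0; rewrite addr0 => /(congr1 (fun z => z - f 0)); rewrite addrK subrr => /esym. Qed.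
Lemma linN u : f (- u) = - f u.
Proof. by have := H (-1) u 0; rewrite addr0 lin0 addr0 !scaleN1r. Qed.
Lemma linB u v : f (u - v) = f u - f v.
Proof. by rewrite linD linN. Qed.
End L.

Theorem mainTheorem3 (K : fieldType) (g h W V : lmodType K)
  (bg : g -> g -> g) (bh : h -> h -> h) (mu : g -> h) (L : h -> g -> g)
  (phi : W -> V) (rho01 : h -> W -> W) (rho00 : h -> V -> V)
  (rho1 : g -> V -> W) :
  crossed_module bg bh mu L ->
  is_lin phi ->
  two_rep bg bh mu L phi rho01 rho00 rho1 ->
  is_rep (semidirect_bracket bg bh L) (rho_bar mu rho01 rho00 rho1).
Proof.
move=> [[bgL1 bgL2 bg0 bgJ] [[bhL1 bhL2 bh0 bhJ] [[muL muB] [[LL1 LL2 Lder Lhom] [muLx Lmu]]]]] phiL [[r01L r01A r01B] [[r00L r00A r00B] [r1L [r1A [phir [r1B [r00mu [r01mu r1Lh]]]]]]]].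
have r01D y1 y2 w : rho01 (y1+y2) w = rho01 y1 w + rho01 y2 w.
  exact: (linD (fun a y1 y2 => r01A a y1 y2 w)).
have r01N y1 y2 w : rho01 (y1-y2) w = rho01 y1 w - rho01 y2 w.
  exact: (linB (fun a y1 y2 => r01A a y1 y2 w)).
have r1D x1 x2 v : rho1 (x1+x2) v = rho1 x1 v + rho1 x2 v.
  exact: (linD (fun a y1 y2 => r1A a y1 y2 v)).
have r1N x1 x2 v : rho1 (x1-x2) v = rho1 x1 v - rho1 x2 v.
  exact: (linB (fun a y1 y2 => r1A a y1 y2 v)).
have bhD1 a b c : bh (a+b) c = bh a c + bh b c.
  exact: (linD (bhL2 c)).
have bhD2 a b c : bh c (a+b) = bh c a + bh c b.
  exact: (linD (bhL1 c)).
have bhanti a b : bh a b = - bh b a.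
  have := bh0 (a+b); rewrite bhD1 !bhD2 !bh0 add0r addr0 => /eqP.
  by rewrite addr_eq0 => /eqP.
have key x0 y0 x1 y1 : bh y0 y1 + mu (bg x0 x1 + L y0 x1 - L y1 x0) = bh (y0 + mu x0) (y1 + mu x1).
  rewrite (linB muL) (linD muL) muB !muLx (bhanti y1 (mu x0)) opprK !bhD1 !bhD2 !addrA.
  by rewrite [LHS](ACl (1*3*4*2)).
split.
- move=> [x y] a [w1 v1] [w2 v2]; rewrite /rho_bar /=.
  rewrite r01L r1L r00L [RHS]surjective_pairing /=.
  by congr (_,_); rewrite scalerDr addrACA.
- move=> a [x1 y1] [x2 y2] [w v]; rewrite /rho_bar /=.
  rewrite [RHS]surjective_pairing /= muL addrACA -scalerDr r01A r1A r00A.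
  by rewrite scalerDr addrACA.
- move=> [x0 y0] [x1 y1] [w v]; rewrite /rho_bar /semidirect_bracket /=.
  rewrite [RHS]surjective_pairing /= key r01B r00B; congr (_,_).
  rewrite r1N r1D r1B !r1Lh (linD (r01L _)) (linD (r01L _)).
  rewrite (r01D y0 (mu x0) (rho1 x1 v)) (r01D y1 (mu x1) (rho1 x0 v)) !r01mu.
  rewrite !opprD !opprK !addrA.
  by rewrite [LHS](ACl (1*5*3*8*2*7*4*6)).
Qed.
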